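(* Let $\ell \in \mathscr{L}_q$ and let $H_q[N(v_\ell)]$ be the subgraph of $H_q$ induced on the neighbourhood of $v_\ell$. Then the edge set of $H_q[N(v_\ell)]$ is the edge-disjoint union of the edge sets of the following cliques: (i) $q+1$ cliques of order $q^2-1$, namely $C_p \setminus \{v_\ell\}$ for the $q+1$ points $p \in \ell \cap \mathscr{U}_q$ (these are pairwise vertex-disjoint); and (ii) $q^3-q$ cliques of order $q+1$, one for each point $p \in \mathscr{U}_q \setminus \ell$, namely $C_p \cap N(v_\ell)$, consisting of the $q+1$ secants through $p$ and through a point of $\ell \cap \mathscr{U}_q$. Every edge of $H_q[N(v_\ell)]$ lies in exactly one of these cliques. In particular, the graph $G_{v_\ell}$ is the union of $q^3-q$ edge-disjoint cliques of order $q+1$.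
   Context: Let $q$ be a prime power and $PG(2,q^2)$ the projective plane over $\mathbb{F}_{q^2}$. The Hermitian unital is $\mathscr{U}_q = \{\langle X,Y,Z\rangle : X^{q+1}+Y^{q+1}+Z^{q+1}=0\}$, a set of points of $PG(2,q^2)$. Every line of $PG(2,q^2)$ meets $\mathscr{U}_q$ in exactly $1$ or exactly $q+1$ points; lines meeting it in $q+1$ points are called secants, and $\mathscr{L}_q$ denotes the set of secants. The graph $H_q$ has vertex set $\{v_\ell : \ell \in \mathscr{L}_q\}$, with $v_{\ell_1} \sim v_{\ell_2}$ iff $\ell_1 \neq \ell_2$ and $\ell_1 \cap \ell_2 \in \mathscr{U}_q$. For each point $p \in \mathscr{U}_q$, let $C_p = \{v_\ell : p \in \ell \in \mathscr{L}_q\}$. For $\ell \in \mathscr{L}_q$, $G_{v_\ell}$ denotes the graph on vertex set $N(v_\ell)$ in which $v_{\ell_1} \sim v_{\ell_2}$ iff $\ell_1 \cap \ell_2 \in \mathscr{U}_q \setminus \ell$. *)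

(* Defs.v *)
From HB Require Import structures.
From mathcomp Require Import all_boot all_order all_algebra.
Unset Printing Implicit Defensive.
Import GRing.Theory.
Local Open Scope ring_scope.

(* Projective plane PG(2,F): a point (resp. line) is a 1- (resp. 2-)
   dimensional subspace of F^3, represented canonically by the square
   matrix <<A>>%MS spanning it (row-space representation of mxalgebra). *)

Definition is_point (F : finFieldType) (A : 'M[F]_3) : bool :=
  (\rank A == 1)%N && (<<A>>%MS == A).
Definition is_line (F : finFieldType) (A : 'M[F]_3) : bool :=
  (\rank A == 2)%N && (<<A>>%MS == A).

Definition pointsPG (F : finFieldType) : {set 'M[F]_3} := [set A | is_point F A].
Definition linesPG (F : finFieldType) : {set 'M[F]_3} := [set A | is_line F A].

Definition incident (F : finFieldType) (P L : 'M[F]_3) : bool := (P <= L)%MS.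

Definition herm (q : nat) (F : finFieldType) (v : 'rV[F]_3) : bool :=
  \sum_(i < 3) v 0 i ^+ q.+1 == 0.

Definition unital (q : nat) (F : finFieldType) : {set 'M[F]_3} :=
  [set P in pointsPG F |
     [exists v : 'rV[F]_3, [&& v != 0, (v <= P)%MS & herm q F v]]].

Definition unital_on (q : nat) (F : finFieldType) (L : 'M[F]_3) : {set 'M[F]_3} :=
  [set P in unital q F | incident F P L].

Definition secants (q : nat) (F : finFieldType) : {set 'M[F]_3} :=
  [set L in linesPG F | #|unital_on q F L| == q.+1].

Definition Hadj (q : nat) (F : finFieldType) (L1 L2 : 'M[F]_3) : bool :=
  (L1 != L2) && [exists P in unital q F, incident F P L1 && incident F P L2].

Definition Nbhd (q : nat) (F : finFieldType) (L : 'M[F]_3) : {set 'M[F]_3} :=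
  [set M in secants q F | Hadj q F L M].

Definition Cp (q : nat) (F : finFieldType) (p : 'M[F]_3) : {set 'M[F]_3} :=
  [set M in secants q F | incident F p M].

Definition Gadj (q : nat) (F : finFieldType) (L M1 M2 : 'M[F]_3) : bool :=
  (M1 != M2) &&
  [exists P in unital q F, [&& ~~ incident F P L, incident F P M1 & incident F P M2]].

Definition is_clique (q : nat) (F : finFieldType) (S : {set 'M[F]_3}) : Prop :=
  S \subset secants q F /\
  (forall M1 M2, M1 \in S -> M2 \in S -> M1 != M2 -> Hadj q F M1 M2).

Definition clique_at (q : nat) (F : finFieldType) (L p : 'M[F]_3) : {set 'M[F]_3} :=
  if incident F p L then Cp q F p :\ L else Cp q F p :&: Nbhd q F L.

(* Main.v *)
Require Import Defs.
From HB Require Import structures.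
From mathcomp Require Import all_boot all_order all_algebra finfield.
Import GRing.Theory.
Local Open Scope ring_scope.

Section Fld.
Variable (q : nat) (F : finFieldType).
Hypothesis q_gt1 : (1 < q)%N.
Hypothesis frobD : forall x y : F, (x + y) ^+ q = x ^+ q + y ^+ q.
Hypothesis frobK : forall x : F, (x ^+ q) ^+ q = x.
Hypothesis cardF : #|F| = (q * q)%N.

Lemma fr0 : (0 : F) ^+ q = 0.
Proof. by rewrite expr0n; case: q q_gt1. Qed.

Lemma frN (x : F) : (- x) ^+ q = - x ^+ q.
Proof. by apply/eqP; rewrite -subr_eq0 opprK -frobD addNr fr0. Qed.

Lemma frB (x y : F) : (x - y) ^+ q = x ^+ q - y ^+ q.
Proof. by rewrite frobD frN. Qed.

Lemma fr_eq0 (x : F) : (x ^+ q == 0) = (x == 0).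
Proof. by rewrite expf_eq0; case: q q_gt1. Qed.

Lemma fr_sum (I : Type) (r : seq I) (P : pred I) (G : I -> F) :
  (\sum_(i <- r | P i) G i) ^+ q = \sum_(i <- r | P i) (G i) ^+ q.
Proof. exact: (big_morph (fun x => x ^+ q) frobD fr0). Qed.

Lemma card_roots_le (P : {poly F}) (S : {set F}) :
  P != 0 -> (forall x, x \in S -> root P x) -> (#|S| <= (size P).-1)%N.
Proof.
move=> P0 HS; rewrite cardE.
have h : (size (enum S) < size P)%N.
  apply: max_poly_roots => //; last exact: enum_uniq.
  by apply/allP => x; rewrite mem_enum => /HS.
by rewrite -ltnS (leq_trans h) // leqSpred.
Qed.

Definition trK := [set x : F | x + x ^+ q == 0].
Definition Fq := [set y : F | y ^+ q == y].

Lemma card_trK_le : (#|trK| <= q)%N.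
Proof.
have hs : size ('X^q + 'X : {poly F}) = q.+1.
  by rewrite size_addl ?size_polyXn ?size_polyX ?ltnS.
apply: leq_trans (@card_roots_le ('X^q + 'X) _ _ _) _; last by rewrite hs.
  by rewrite -size_poly_eq0 hs.
by move=> x; rewrite inE /root !hornerE addrC.
Qed.

Lemma card_Fq_le : (#|Fq| <= q)%N.
Proof.
have hs : size ('X^q - 'X : {poly F}) = q.+1.
  by rewrite size_addl ?size_polyXn ?size_opp ?size_polyX ?ltnS.
apply: leq_trans (@card_roots_le ('X^q - 'X) _ _ _) _; last by rewrite hs.
  by rewrite -size_poly_eq0 hs.
by move=> x; rewrite inE /root !hornerE subr_eq0.
Qed.

Definition trF (x : F) := x + x ^+ q.
Definition trI := [set trF x | x in [set: F]].

Lemma trI_sub : trI \subset Fq.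
Proof.
apply/subsetP => y /imsetP [x _ ->]; rewrite inE /trF frobD frobK addrC //.
Qed.

Lemma card_FKI : (#|F| <= #|trI| * #|trK|)%N.
Proof.
pose sec (y : F) := odflt 0 [pick x | trF x == y].
pose f (yk : F * F) := sec yk.1 + yk.2.
rewrite -cardsX -cardsT; apply: leq_trans (leq_imset_card f _).
apply: subset_leq_card; apply/subsetP => x _.
have hs : trF (sec (trF x)) = trF x.
  rewrite /sec; case: pickP => [y /eqP -> //|/(_ x)]; by rewrite eqxx.
apply/imsetP; exists (trF x, x - sec (trF x)); last by rewrite /f /= addrC subrK.
rewrite !inE; apply/andP; split; first by apply/imsetP; exists x.
rewrite /= frB addrACA -/(trF x) -opprD -/(trF (sec _)) hs subrr.
by [].
Qed.

Lemma card_trK : #|trK| = q.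
Proof.
have h1 := card_FKI; have h2 := card_trK_le.
have h3 : (#|trI| <= q)%N by apply: leq_trans (subset_leq_card trI_sub) card_Fq_le.
rewrite cardF in h1; apply/eqP; rewrite eqn_leq h2 /=.
case: ltnP => // hlt; have : (#|trI| * #|trK| < q * q)%N.
  by apply: leq_ltn_trans (leq_mul h3 (leqnn _)) _; rewrite ltn_mul2l hlt; case: q q_gt1.
by rewrite ltnNge h1.
Qed.

Lemma tr_surj (a : F) : a ^+ q = a -> exists s, s + s ^+ q = a.
Proof.
move=> ha.
have h3 : (#|trI| <= q)%N by apply: leq_trans (subset_leq_card trI_sub) card_Fq_le.
have h1 := card_FKI; rewrite cardF card_trK in h1.
have hI : #|trI| = q.
  apply/eqP; rewrite eqn_leq h3 /=; move: h1; rewrite leq_mul2r; case: q q_gt1 => //.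
have hE : #|trI| = #|Fq| by apply/eqP; rewrite eqn_leq subset_leq_card ?trI_sub // hI card_Fq_le.
have : a \in trI by rewrite (subset_cardP hE trI_sub) inE ha.
by case/imsetP => s _ ->; exists s.
Qed.


Definition frob (x : F) := x ^+ q.
Fact frob_zmod : zmod_morphism frob.
Proof. by move=> x y; rewrite /frob frB. Qed.
HB.instance Definition _ := GRing.isZmodMorphism.Build F F frob frob_zmod.
Fact frob_mon : monoid_morphism frob.
Proof. by split; [rewrite /frob expr1n | move=> x y; rewrite /frob exprMn]. Qed.
HB.instance Definition _ := GRing.isMonoidMorphism.Build F F frob frob_mon.

Local Notation V := 'rV[F]_3.
Definition cj (v : V) : V := map_mx frob v.
Definition hf (u v : V) : F := (u *m (cj v)^T) 0 0.

Lemma hfE u v : hf u v = \sum_(i < 3) u 0 i * (v 0 i) ^+ q.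
Proof. by rewrite /hf mxE; apply: eq_bigr => i _; rewrite !mxE. Qed.

Lemma herm_hf v : herm q F v = (hf v v == 0).
Proof. by rewrite /herm hfE; congr (_ == _); apply: eq_bigr => i _; rewrite exprS. Qed.

Lemma hfDl u w v : hf (u + w) v = hf u v + hf w v.
Proof. by rewrite !hfE -big_split; apply: eq_bigr => i _; rewrite mxE mulrDl. Qed.
Lemma hfZl a u v : hf (a *: u) v = a * hf u v.
Proof. by rewrite !hfE mulr_sumr; apply: eq_bigr => i _; rewrite mxE mulrA. Qed.
Lemma hfDr u v w : hf u (v + w) = hf u v + hf u w.
Proof. by rewrite !hfE -big_split; apply: eq_bigr => i _; rewrite mxE frobD mulrDr. Qed.
Lemma hfZr a u v : hf u (a *: v) = a ^+ q * hf u v.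
Proof. by rewrite !hfE mulr_sumr; apply: eq_bigr => i _; rewrite mxE exprMn mulrCA. Qed.
Lemma hfC u v : hf v u = (hf u v) ^+ q.
Proof. by rewrite !hfE fr_sum; apply: eq_bigr => i _; rewrite exprMn frobK mulrC. Qed.
Lemma hf0l v : hf 0 v = 0.
Proof. by rewrite hfE big1 // => i _; rewrite mxE mul0r. Qed.

Lemma rank_cj m (A : 'M[F]_(m, 3)) : \rank (map_mx frob A) = \rank A.
Proof. exact: mxrank_map. Qed.


Lemma eq_rank_sub m1 m2 (A : 'M[F]_(m1, 3)) (B : 'M[F]_(m2, 3)) :
  (A <= B)%MS -> (\rank B <= \rank A)%N -> (B <= A)%MS.
Proof.
by move=> sAB hr; rewrite -(mxrank_leqif_sup sAB).2 eqn_leq hr mxrankS.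
Qed.

Lemma rV_sym (a b : V) : a != 0 -> b != 0 -> (a <= b)%MS = (b <= a)%MS.
Proof.
move=> a0 b0; apply/idP/idP => h; apply: eq_rank_sub h _; by rewrite !rank_rV a0 b0.
Qed.

Lemma rank_adds2 (a b : V) : a != 0 -> b != 0 -> ~~ (a <= b)%MS -> \rank (a + b)%MS = 2.
Proof.
move=> a0 b0 nab; have := mxrank_sum_cap a b.
have -> : \rank (a :&: b)%MS = 0.
  apply/eqP; rewrite mxrank_eq0; apply/negPn/negP => c0.
  have : (a <= a :&: b)%MS.
    apply: eq_rank_sub (capmxSl _ _) _; by rewrite rank_rV a0 lt0n mxrank_eq0.
  by rewrite sub_capmx (negbTE nab) andbF.
by rewrite addn0 !rank_rV a0 b0 /= => ->.
Qed.

Lemma indep (a b : V) x y : a != 0 -> b != 0 -> ~~ (a <= b)%MS ->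
  x *: a + y *: b = 0 -> x = 0 /\ y = 0.
Proof.
move=> a0 b0 nab h; have [y0|y0] := eqVneq y 0.
  move: h; rewrite y0 scale0r addr0 => /eqP; rewrite scaler_eq0 (negbTE a0) orbF.
  by move/eqP.
exfalso; move: nab; rewrite rV_sym // => /negP; apply.
have -> : b = y^-1 *: ((- x) *: a).
  have hb : y *: b = - (x *: a) by apply/eqP; rewrite -addr_eq0 addrC h.
  by rewrite -{1}[b](scalerK y0) hb scaleNr.
by rewrite !scalemx_sub ?submx_refl.
Qed.

Definition pt (v : V) : 'M[F]_3 := <<v>>%MS.

Lemma pt_point v : v != 0 -> is_point F (pt v).
Proof. by move=> v0; rewrite /is_point /pt mxrank_gen rank_rV v0 genmx_id eqxx. Qed.

Lemma point_pt P : is_point F P -> exists2 v, v != 0 & P = pt v.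
Proof.
case/andP => /eqP r1 /eqP gP; have P0 : P != 0 by rewrite -mxrank_eq0 r1.
exists (nz_row P); first by rewrite nz_row_eq0.
rewrite /pt -{1}gP; apply/genmxP; rewrite nz_row_sub andbT.
apply: eq_rank_sub (nz_row_sub P) _; by rewrite r1 rank_rV nz_row_eq0 P0.
Qed.

Lemma inc_pt v L : incident F (pt v) L = (v <= L)%MS.
Proof. by rewrite /incident /pt genmxE. Qed.

Lemma ptE u w : u != 0 -> w != 0 -> (pt u == pt w) = (u <= w)%MS.
Proof.
move=> u0 w0; apply/eqP/idP => [h|h].
  have : (u <= pt u)%MS by rewrite /pt genmxE submx_refl.
  by rewrite h /pt genmxE.
by apply/genmxP; rewrite h -rV_sym.
Qed.

Lemma pt_inj u w : u != 0 -> w != 0 -> pt u = pt w -> (u <= w)%MS.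
Proof. by move=> u0 w0 /eqP; rewrite ptE. Qed.

Lemma point_neq0 P : is_point F P -> P != 0.
Proof. by case/andP => /eqP r1 _; rewrite -mxrank_eq0 r1. Qed.

Lemma line_eq (L : 'M[F]_3) (a b : V) : is_line F L -> a != 0 -> b != 0 -> ~~ (a <= b)%MS ->
  (a <= L)%MS -> (b <= L)%MS -> L = <<(a + b)%MS>>%MS.
Proof.
case/andP => /eqP r2 /eqP gL a0 b0 nab aL bL.
have sL : (a + b <= L)%MS by rewrite addsmx_sub aL bL.
rewrite -gL; apply/genmxP; rewrite sL andbT; apply: eq_rank_sub sL _.
by rewrite r2 rank_adds2.
Qed.

Lemma line_adds (a b : V) : a != 0 -> b != 0 -> ~~ (a <= b)%MS -> is_line F <<(a + b)%MS>>%MS.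
Proof. by move=> a0 b0 nab; rewrite /is_line mxrank_gen rank_adds2 // genmx_id eqxx. Qed.

Lemma line_uniq (L1 L2 : 'M[F]_3) (a b : V) : is_line F L1 -> is_line F L2 ->
  a != 0 -> b != 0 -> ~~ (a <= b)%MS -> (a <= L1)%MS -> (b <= L1)%MS ->
  (a <= L2)%MS -> (b <= L2)%MS -> L1 = L2.
Proof.
move=> l1 l2 a0 b0 nab h1 h2 h3 h4.
by rewrite (@line_eq L1 a b l1 a0 b0 nab h1 h2) (@line_eq L2 a b l2 a0 b0 nab h3 h4).
Qed.


Lemma adds_decomp (a b v : V) : (v <= a + b)%MS -> exists x y, v = x *: a + y *: b.
Proof.
case/sub_addsmxP => [[u1 u2] /= ->]; exists (u1 0 0), (u2 0 0).
by rewrite {1}[u1]mx11_scalar {1}[u2]mx11_scalar !mul_scalar_mx.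
Qed.

Lemma par_neq0 (a b : V) t : a != 0 -> b != 0 -> ~~ (a <= b)%MS -> b + t *: a != 0.
Proof.
move=> a0 b0 nab; apply/eqP => h.
have h' : t *: a + 1 *: b = 0 by rewrite scale1r addrC.
have [_ /eqP] := indep a b t 1 a0 b0 nab h'.
by rewrite oner_eq0.
Qed.

Lemma line_points (a b : V) : a != 0 -> b != 0 -> ~~ (a <= b)%MS ->
  [set P in pointsPG F | incident F P <<(a + b)%MS>>%MS] =
  pt a |: [set pt (b + t *: a) | t : F].
Proof.
move=> a0 b0 nab; apply/setP => P; rewrite !inE; apply/andP/orP.
  case => hP; case/point_pt: hP => v v0 ->; rewrite inc_pt genmxE.
  case/adds_decomp => x [y ev].
  have [y0|y0] := eqVneq y 0.
    left; rewrite ptE // ev y0 scale0r addr0 scalemx_sub ?submx_refl //.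
  right; apply/imsetP; exists (x / y) => //; apply/eqP; rewrite ptE ?par_neq0 //.
  rewrite (_ : v = y *: (b + (x / y) *: a)) ?scalemx_sub ?submx_refl //.
  by rewrite ev scalerDr scalerA mulrCA mulfV // mulr1 addrC.
case => [/eqP ->|/imsetP [t _ ->]].
  by split; [rewrite pt_point | rewrite inc_pt genmxE addsmxSl].
split; first by rewrite pt_point ?par_neq0.
by rewrite inc_pt genmxE addmx_sub ?addsmxSr // scalemx_sub ?addsmxSl.
Qed.

Lemma pt_par_inj (a b : V) : a != 0 -> b != 0 -> ~~ (a <= b)%MS ->
  injective (fun t : F => pt (b + t *: a)).
Proof.
move=> a0 b0 nab t t' /pt_inj; rewrite !par_neq0 // => /(_ isT isT) /sub_rVP [c hc].
have := indep a b (t - c * t') (1 - c) a0 b0 nab.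
rewrite scalerBl scalerBl scale1r -scalerA.
rewrite (_ : t *: a - c *: (t' *: a) + (b - c *: b) = b + t *: a - c *: (b + t' *: a)); last first.
  by rewrite scalerDr opprD addrACA (addrC (t *: a)) (addrC (- (c *: (t' *: a)))).
rewrite -hc subrr => /(_ erefl) [h1 /eqP h2]; move: h1; rewrite subr_eq0 in h2.
by rewrite -(eqP h2) mul1r => /eqP; rewrite subr_eq0 => /eqP.
Qed.

Lemma pt_par_neq (a b : V) t : a != 0 -> b != 0 -> ~~ (a <= b)%MS ->
  pt a != pt (b + t *: a).
Proof.
move=> a0 b0 nab; rewrite ptE ?par_neq0 //; apply/negP => /sub_rVP [c hc].
have := indep a b (c * t - 1) c a0 b0 nab.
rewrite scalerBl scale1r -scalerA (_ : c *: (t *: a) - a + c *: b = 0).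
  move/(_ erefl); case=> /eqP; rewrite subr_eq0 => /eqP h1 h2; move: h1; rewrite h2 mul0r => /eqP.
  by rewrite eq_sym oner_eq0.
by rewrite addrAC -scalerDr addrC (addrC (t *: a)) -hc addNr.
Qed.

Lemma card_line_points (a b : V) : a != 0 -> b != 0 -> ~~ (a <= b)%MS ->
  #|[set P in pointsPG F | incident F P <<(a + b)%MS>>%MS]| = #|F|.+1.
Proof.
move=> a0 b0 nab; rewrite line_points // cardsU1 card_imset ?cardT ?size_enum_ord //.
  rewrite (_ : pt a \in _ = false) // ?cardE //; apply/negbTE/imsetP => [[t _]].
  by apply/eqP; rewrite pt_par_neq.
exact: pt_par_inj.
Qed.


Lemma mx11_0 (M : 'M[F]_1) : M 0 0 = 0 -> M = 0.
Proof. by move=> h; apply/matrixP => i j; rewrite !ord1 mxE. Qed.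

Lemma hfZZ a v : hf (a *: v) (a *: v) = a * a ^+ q * hf v v.
Proof. by rewrite hfZl hfZr mulrA. Qed.

Lemma unital_pt v : v != 0 -> (pt v \in unital q F) = (hf v v == 0).
Proof.
move=> v0; rewrite /unital inE [pt v \in _]inE pt_point //=.
apply/existsP/idP => [[w /and3P [w0 wv hw]]|h].
  move: wv; rewrite /pt genmxE => /sub_rVP [a ea].
  move: hw w0; rewrite herm_hf ea hfZZ !mulf_eq0 fr_eq0 orbb scaler_eq0.
  by case/orP => // /eqP ->; rewrite eqxx.
by exists v; rewrite v0 /pt genmxE submx_refl herm_hf.
Qed.

Lemma TI (u w : V) : u != 0 -> w != 0 -> ~~ (u <= w)%MS ->
  hf u u = 0 -> hf w w = 0 -> hf u w = 0 -> False.
Proof.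
move=> u0 w0 nuw huu hww huw.
have hwu : hf w u = 0 by rewrite hfC huw fr0.
have M0 : col_mx u w *m (map_mx frob (col_mx u w))^T = 0.
  rewrite map_col_mx tr_col_mx mul_col_row.
  have h0 x y : hf x y = 0 -> x *m (map_mx frob y)^T = 0 by exact: mx11_0.
  by rewrite !h0 ?block_mx0.
have := mulmx0_rank_max M0; rewrite mxrank_tr mxrank_map -addsmxE rank_adds2 //.
Qed.

Definition tg (u : V) : 'M[F]_3 := <<kermx (cj u)^T>>%MS.

Lemma sub_tg x u : (x <= tg u)%MS = (hf x u == 0).
Proof.
rewrite /tg genmxE /hf; apply/sub_kermxP/eqP => [->|h]; first by rewrite mxE.
exact: mx11_0.
Qed.

Lemma tg_line u : u != 0 -> is_line F (tg u).
Proof.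
move=> u0; rewrite /is_line /tg mxrank_gen mxrank_ker mxrank_tr /cj mxrank_map.
by rewrite rank_rV u0 genmx_id eqxx.
Qed.

Lemma hf_par (u w : V) s :
  hf (w + s *: u) (w + s *: u) =
  hf w w + s * hf u w + s ^+ q * hf w u + s * s ^+ q * hf u u.
Proof.
rewrite !hfDl !hfDr !hfZl !hfZr !addrA mulrA; congr (_ + _).
by rewrite addrAC.
Qed.


Lemma unital_point P : P \in unital q F -> is_point F P.
Proof. by rewrite inE => /andP [] ; rewrite inE. Qed.

Lemma card_trS (d : F) : d != 0 ->
  #|[set t : F | t * d + (t * d) ^+ q == 0]| = q.
Proof.
move=> d0; apply: etrans card_trK; rewrite -(card_imset _ (mulIf d0)).
apply: eq_card => x; rewrite [RHS]inE; apply/imsetP/idP => [[t] |h].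
  by rewrite inE => h ->.
by exists (x / d); rewrite ?inE divfK.
Qed.

Lemma sec2 (L : 'M[F]_3) (u w : V) : is_line F L -> u != 0 -> w != 0 ->
  ~~ (u <= w)%MS -> (u <= L)%MS -> (w <= L)%MS -> hf u u = 0 -> hf w w = 0 ->
  #|unital_on q F L| = q.+1.
Proof.
move=> lL u0 w0 nuw uL wL huu hww.
set d := hf u w.
have d0 : d != 0 by apply/eqP => h; case: (TI u w u0 w0 nuw huu hww h).
have hwu : hf w u = d ^+ q by rewrite hfC.
have Lw := line_eq L u w lL u0 w0 nuw uL wL.
set S := [set t : F | t * d + (t * d) ^+ q == 0].
have eqU : unital_on q F L = pt u |: [set pt (w + t *: u) | t in S].
  apply/setP => P; rewrite /unital_on [LHS]inE [RHS]inE; apply/andP/orP.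
    case=> hU hI.
    have : P \in [set P in pointsPG F | incident F P <<(u + w)%MS>>%MS].
      by rewrite inE -Lw hI andbT inE unital_point.
    rewrite line_points // => /setU1P [->|/imsetP [t _ eP]]; first by left; rewrite inE.
    right; apply/imsetP; exists t => //; rewrite inE.
    move: hU; rewrite eP unital_pt ?par_neq0 // hf_par huu hww hwu mulr0 addr0 add0r.
    by rewrite exprMn.
  case=> [|/imsetP [t tS ->]]; first by rewrite inE => /eqP ->; rewrite unital_pt // huu eqxx inc_pt.
  rewrite unital_pt ?par_neq0 // hf_par huu hww hwu mulr0 addr0 add0r -exprMn.
  move: tS; rewrite inE => -> ; rewrite inc_pt addmx_sub ?scalemx_sub //.
rewrite eqU cardsU1 card_in_imset ?card_trS //; last first.
  by move=> t t' _ _; apply: pt_par_inj.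
rewrite (_ : pt u \in _ = false) //; apply/negbTE/imsetP => [[t _]].
by apply/eqP; rewrite pt_par_neq.
Qed.


Lemma line_sub_eq (L1 L2 : 'M[F]_3) : is_line F L1 -> is_line F L2 ->
  (L1 <= L2)%MS -> L1 = L2.
Proof.
case/andP => /eqP r1 /eqP g1; case/andP => /eqP r2 /eqP g2 s12.
rewrite -g1 -g2; apply/genmxP; rewrite s12 /=; apply: eq_rank_sub s12 _.
by rewrite r1 r2.
Qed.

Lemma tg_unital u : u != 0 -> hf u u = 0 -> unital_on q F (tg u) = [set pt u].
Proof.
move=> u0 huu; apply/setP => P; rewrite /unital_on in_set in_set1; apply/andP/eqP => [[hU hI]|->].
  have := unital_point _ hU; case/point_pt => w w0 eP; move: hU hI.
  rewrite eP unital_pt // inc_pt sub_tg => /eqP hww /eqP hwu.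
  apply/eqP; rewrite ptE // rV_sym //; apply/negPn/negP => nuw.
  by apply: (TI u w u0 w0 nuw huu hww); rewrite hfC hwu fr0.
by rewrite unital_pt // huu inc_pt sub_tg huu.
Qed.

Lemma tg_not_secant u : u != 0 -> hf u u = 0 -> tg u \notin secants q F.
Proof.
move=> u0 huu; rewrite inE tg_unital // cards1 andbC /=.
by case: q q_gt1.
Qed.

Lemma nontg_secant L u : is_line F L -> u != 0 -> hf u u = 0 -> (u <= L)%MS ->
  L != tg u -> L \in secants q F.
Proof.
move=> lL u0 huu uL nLt.
have : ~~ (L <= tg u)%MS.
  by apply: contra nLt => s; apply/eqP; apply: line_sub_eq => //; apply: tg_line.
case/row_subPn => i; set w := row i L; rewrite sub_tg => hwu.
have wL : (w <= L)%MS by apply: row_sub.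
set a := hf w w; set d := hf u w.
have hd : hf w u = d ^+ q by rewrite hfC.
have d0 : d != 0 by apply: contra hwu; rewrite hd => /eqP ->; rewrite fr0.
have [c hc] : exists c, c + c ^+ q = - a.
  by apply: tr_surj; rewrite frN /a -hfC.
set s := c / d; set w' := w + s *: u.
have hw'u : hf w' u = hf w u by rewrite hfDl hfZl huu mulr0 addr0.
have nw'u : ~~ (w' <= u)%MS.
  apply/negP => /sub_rVP [k ek]; move: hwu; rewrite -hw'u ek hfZl huu mulr0 eqxx.
  by [].
have w'0 : w' != 0 by apply: contraNneq nw'u => ->; rewrite sub0mx.
have hww : hf w' w' = 0.
  by rewrite hf_par huu mulr0 addr0 hd -exprMn /s divfK // -addrA hc -/a subrr.
rewrite inE; apply/andP; split; first by rewrite inE. apply/eqP; apply: (sec2 L u w') => //.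
- by rewrite rV_sym.
- by rewrite addmx_sub ?scalemx_sub.
Qed.


Lemma line_two (m : 'M[F]_3) : is_line F m ->
  exists a b : V, [/\ a != 0, b != 0, ~~ (a <= b)%MS & m = <<(a + b)%MS>>%MS]
    /\ (a <= m)%MS /\ (b <= m)%MS.
Proof.
move=> lm; have m0 : m != 0 by case/andP: lm => /eqP r2 _; rewrite -mxrank_eq0 r2.
set a := nz_row m.
have a0 : a != 0 by rewrite nz_row_eq0.
have am : (a <= m)%MS by apply: nz_row_sub.
have : ~~ (m <= a)%MS.
  apply/negP => /mxrankS; case/andP: lm => /eqP -> _; by rewrite rank_rV a0.
case/row_subPn => i; set b := row i m => nba.
have bm : (b <= m)%MS by apply: row_sub.
have b0 : b != 0 by apply: contraNneq nba => ->; rewrite sub0mx.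
have nab : ~~ (a <= b)%MS by rewrite rV_sym.
exists a, b; split => //; split => //.
exact: line_eq.
Qed.

Lemma pt_adds (u v : V) : <<(pt u + pt v)%MS>>%MS = <<(u + v)%MS>>%MS.
Proof. by apply/genmxP; apply/eqmxP; apply: adds_eqmx; apply: genmxE. Qed.

Lemma card_lines_through u : u != 0 ->
  #|[set L in linesPG F | incident F (pt u) L]| = #|F|.+1.
Proof.
move=> u0; set m := <<(u^C)%MS>>%MS.
have lm : is_line F m.
  by rewrite /is_line /m mxrank_gen mxrank_compl rank_rV u0 genmx_id eqxx.
have num : ~~ (u <= m)%MS.
  apply/negP; rewrite /m genmxE => h.
  have : (u <= u :&: u^C)%MS by rewrite sub_capmx submx_refl h.
  by rewrite capmx_compl submx0 (negbTE u0).
have [a [b [[a0 b0 nab em] _]]] := line_two m lm.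
rewrite -(card_line_points a b a0 b0 nab) -em.
set f := fun Q : 'M[F]_3 => <<(pt u + Q)%MS>>%MS.
have key : forall Q, Q \in [set P in pointsPG F | incident F P m] ->
   exists2 v : V, v != 0 & [/\ Q = pt v, (v <= m)%MS, ~~ (u <= v)%MS & f Q = <<(u + v)%MS>>%MS].
  move=> Q; rewrite inE inE => /andP [/point_pt [v v0 ->]]; rewrite inc_pt => vm.
  exists v => //; split => //; last by rewrite /f pt_adds.
  by apply: contra num => h; apply: submx_trans h vm.
have -> : [set L in linesPG F | incident F (pt u) L] =
          f @: [set P in pointsPG F | incident F P m].
  apply/setP => L; apply/idP/imsetP.
    rewrite inE inE => /andP [lL]; rewrite inc_pt => uL.
    have : (L :&: m)%MS != 0.
      rewrite -mxrank_eq0; have := mxrank_sum_cap L m.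
      case/andP: lL => /eqP -> _; case/andP: lm => /eqP -> _.
      have := rank_leq_col (L + m)%MS; move=> le3 eq4; apply/eqP => h0.
      by move: eq4 le3; rewrite h0 addn0 => ->.
    move=> c0; set v := nz_row (L :&: m)%MS.
    have v0 : v != 0 by rewrite nz_row_eq0.
    have vc : (v <= L :&: m)%MS by apply: nz_row_sub.
    move: vc; rewrite sub_capmx => /andP [vL vm].
    have nuv : ~~ (u <= v)%MS by apply: contra num => h; apply: submx_trans h vm.
    exists (pt v); first by rewrite inE inE pt_point // inc_pt.
    by rewrite /f pt_adds; apply: line_eq.
  case=> Q hQ ->; have [v v0 [-> vm nuv ->]] := key Q hQ.
  rewrite inE inE line_adds // inc_pt genmxE addsmxSl //.
apply: card_in_imset => Q1 Q2 h1 h2 e.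
have [v1 v10 [e1 vm1 nuv1 f1]] := key Q1 h1.
have [v2 v20 [e2 vm2 nuv2 f2]] := key Q2 h2.
rewrite e1 e2; apply/eqP; rewrite ptE //; apply/negPn/negP => nv12.
have l1 := line_adds u v1 u0 v10 nuv1.
have v1L : (v1 <= <<(u + v1)%MS>>%MS)%MS by rewrite genmxE addsmxSr.
have v2L : (v2 <= <<(u + v1)%MS>>%MS)%MS by rewrite -f1 e f2 genmxE addsmxSr.
have := line_uniq _ _ v1 v2 l1 lm v10 v20 nv12 v1L v2L vm1 vm2.
move=> eL; move: num; rewrite -eL genmxE addsmxSl.
by [].
Qed.


Lemma secant_line L : L \in secants q F -> is_line F L.
Proof. by rewrite inE inE => /andP []. Qed.

Lemma Cp_eq u : u != 0 -> hf u u = 0 ->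
  Cp q F (pt u) = [set L in linesPG F | incident F (pt u) L] :\ tg u.
Proof.
move=> u0 huu; apply/setP => L; rewrite /Cp in_setD1 !inE.
apply/idP/idP => [/andP [/andP [lL sc] iL] | /and3P [nLt lL iL]].
  rewrite lL iL !andbT; apply: contraTneq sc => ->; rewrite tg_unital // cards1.
  by case: q q_gt1.
have := nontg_secant L u lL u0 huu; rewrite -inc_pt => /(_ iL nLt).
by rewrite inE inE lL /= => ->.
Qed.

Lemma card_Cp u : u != 0 -> hf u u = 0 -> #|Cp q F (pt u)| = (q * q)%N.
Proof.
move=> u0 huu; rewrite Cp_eq //.
have := cardsD1 (tg u) [set L in linesPG F | incident F (pt u) L].
rewrite card_lines_through // cardF inE inE tg_line // inc_pt sub_tg huu eqxx /=.
by rewrite add1n => -[].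
Qed.


Lemma card_unital u : u != 0 -> hf u u = 0 -> #|unital q F| = (q * q * q).+1.
Proof.
move=> u0 huu; set p := pt u.
have pU : p \in unital q F by rewrite unital_pt // huu.
rewrite (cardsD1 p) pU add1n; congr _.+1.
rewrite -sum1_card.
set jn := fun r : 'M[F]_3 => <<(p + r)%MS>>%MS.
have hr : forall r, r \in unital q F :\ p -> exists2 w : V, w != 0 &
    [/\ r = pt w, hf w w = 0, ~~ (u <= w)%MS & jn r = <<(u + w)%MS>>%MS].
  move=> r; rewrite in_setD1 => /andP [rp rU].
  have [w w0 er] := point_pt _ (unital_point _ rU).
  exists w => //; split => //.
  - by move: rU; rewrite er unital_pt // => /eqP.
  - by rewrite -ptE // -/p -er eq_sym.
  - by rewrite /jn er pt_adds.
rewrite (partition_big jn (fun M => M \in Cp q F p)); last first.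
  move=> r /hr [w w0 [er hww nuw ->]].
  rewrite /Cp in_set; apply/andP; split; last by rewrite inc_pt genmxE addsmxSl.
  rewrite in_set; apply/andP; split; first by rewrite inE line_adds.
  apply/eqP; apply: (sec2 _ u w) => //; rewrite ?genmxE ?addsmxSl ?addsmxSr //.
  exact: line_adds.
rewrite (eq_bigr (fun _ => q)); first by rewrite sum_nat_const card_Cp // mulnA.
move=> M hM; rewrite sum1dep_card.
have sM : M \in secants q F by move: hM; rewrite /Cp in_set => /andP [].
have pM : incident F p M by move: hM; rewrite /Cp in_set => /andP [].
have -> : [set r | (r \in unital q F :\ p) && (jn r == M)] = unital_on q F M :\ p.
  apply/setP => r; rewrite [LHS]in_set; apply/idP/idP.
    case/andP => hA /eqP eM; have [w w0 [er hww nuw ej]] := hr r hA.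
    move: hA; rewrite !in_setD1 => /andP [rp rU]; rewrite rp /unital_on in_set rU /=.
    by rewrite -eM ej er inc_pt genmxE addsmxSr.
  rewrite /unital_on in_setD1 in_set => /andP [rp /andP [rU iM]].
  have hA : r \in unital q F :\ p by rewrite in_setD1 rp rU.
  rewrite hA /=; have [w w0 [er hww nuw ej]] := hr r hA.
  rewrite ej; apply/eqP; symmetry; apply: line_eq => //; first exact: secant_line.
    by rewrite -inc_pt.
  by rewrite -inc_pt -er.
have := cardsD1 p (unital_on q F M).
rewrite /unital_on [p \in _]in_set pU pM add1n.
by move: sM; rewrite in_set => /andP [_ /eqP ->] [].
Qed.


Lemma unital_vec P : P \in unital q F -> exists2 u : V, u != 0 & P = pt u /\ hf u u = 0.
Proof.
move=> PU; have [u u0 eP] := point_pt _ (unital_point _ PU).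
by exists u => //; split => //; apply/eqP; rewrite -unital_pt // -eP.
Qed.

Lemma two_points_line P Q L1 L2 : is_point F P -> is_point F Q -> P != Q ->
  is_line F L1 -> is_line F L2 -> incident F P L1 -> incident F Q L1 ->
  incident F P L2 -> incident F Q L2 -> L1 = L2.
Proof.
move=> /point_pt [a a0 ->] /point_pt [b b0 ->]; rewrite ptE // !inc_pt => nab.
by move=> l1 l2 h1 h2 h3 h4; apply: (line_uniq _ _ a b l1 l2 a0 b0 nab).
Qed.

Definition jn (P Q : 'M[F]_3) : 'M[F]_3 := <<(P + Q)%MS>>%MS.

Lemma jn_props P Q : P \in unital q F -> Q \in unital q F -> P != Q ->
  [/\ jn P Q \in secants q F, incident F P (jn P Q) & incident F Q (jn P Q)].
Proof.
move=> /unital_vec [a a0 [-> haa]] /unital_vec [b b0 [-> hbb]].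
rewrite ptE // /jn pt_adds !inc_pt !genmxE addsmxSl addsmxSr => nab; split => //.
rewrite inE; apply/andP; split; first by rewrite inE line_adds.
apply/eqP; apply: (sec2 _ a b) => //; rewrite ?genmxE ?addsmxSl ?addsmxSr //.
exact: line_adds.
Qed.

Lemma unital_pointP P : P \in unital q F -> is_point F P.
Proof. exact: unital_point. Qed.

Lemma secantP L : L \in secants q F -> is_line F L.
Proof. exact: secant_line. Qed.


Lemma setE (A : {set 'M[F]_3}) (Pr : pred 'M[F]_3) M :
  (M \in [set x in A | Pr x]) = (M \in A) && Pr M.
Proof. by rewrite in_set. Qed.

Lemma CpE P M : (M \in Cp q F P) = (M \in secants q F) && incident F P M.
Proof. exact: setE. Qed.
Lemma NbE l M : (M \in Nbhd q F l) = (M \in secants q F) && Hadj q F l M.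
Proof. exact: setE. Qed.
Lemma onlE l P : (P \in unital_on q F l) = (P \in unital q F) && incident F P l.
Proof. exact: setE. Qed.

Lemma card_CpU P : P \in unital q F -> #|Cp q F P| = (q * q)%N.
Proof. by case/unital_vec => u u0 [-> huu]; apply: card_Cp. Qed.

Lemma clique_at_inc l P M : M \in clique_at q F l P ->
  M \in secants q F /\ incident F P M.
Proof.
rewrite /clique_at; case: ifP => _.
  by rewrite in_setD1 CpE => /andP [_ /andP [-> ->]].
by rewrite in_setI CpE => /andP [/andP [-> ->] _].
Qed.


Lemma main_sec (l : 'M[F]_3) (hl : l \in secants q F) :
  [/\
   [/\ #|unital_on q F l| = q.+1,
       (forall p, p \in unital_on q F l ->
          [/\ Cp q F p :\ l \subset Nbhd q F l,
              is_clique q F (Cp q F p :\ l)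
            & #|Cp q F p :\ l| = (q ^ 2 - 1)%N])
     & (forall p p', p \in unital_on q F l -> p' \in unital_on q F l -> p != p' ->
          [disjoint (Cp q F p :\ l) & (Cp q F p' :\ l)])],
   [/\ #|unital q F :\: unital_on q F l| = (q ^ 3 - q)%N
     & (forall p, p \in unital q F :\: unital_on q F l ->
          [/\ Cp q F p :&: Nbhd q F l =
                [set M in secants q F |
                   incident F p M && [exists r in unital_on q F l, incident F r M]],
              is_clique q F (Cp q F p :&: Nbhd q F l)
            & #|Cp q F p :&: Nbhd q F l| = q.+1])],
   (forall M1 M2, M1 \in Nbhd q F l -> M2 \in Nbhd q F l -> Hadj q F M1 M2 ->
      exists! p, [/\ p \in unital q F, M1 \in clique_at q F l p
                   & M2 \in clique_at q F l p])
 & (forall M1 M2, M1 \in Nbhd q F l -> M2 \in Nbhd q F l ->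
      Gadj q F l M1 M2 <->
      (M1 != M2 /\ exists2 p, p \in unital q F :\: unital_on q F l &
                              (M1 \in clique_at q F l p) && (M2 \in clique_at q F l p)))].
Proof.
have lL := secant_line _ hl.
have hcl : #|unital_on q F l| = q.+1 by move: hl; rewrite inE => /andP [_ /eqP].
have [p0 p0l] : exists p0, p0 \in unital_on q F l.
  by apply/set0Pn; rewrite -card_gt0 hcl.
have p0U : p0 \in unital q F by move: p0l; rewrite onlE => /andP [].
have [u0 u00 [ep0 hu0]] := unital_vec _ p0U.
have cardU := card_unital u0 u00 hu0.
split.
- split => //.
  + move=> p pl; move: (pl); rewrite onlE => /andP [pU pinc]; split.
    * apply/subsetP => M; rewrite in_setD1 CpE => /andP [Ml /andP [sM pM]].
      rewrite NbE sM /Hadj eq_sym Ml /=; apply/existsP; exists p.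
      by rewrite pU pinc pM.
    * split; first by apply/subsetP => M; rewrite in_setD1 CpE => /andP [_ /andP [-> _]].
      move=> M1 M2; rewrite !in_setD1 !CpE => /andP [_ /andP [_ h1]] /andP [_ /andP [_ h2]] n12.
      by rewrite /Hadj n12; apply/existsP; exists p; rewrite pU h1 h2.
    * have h := cardsD1 l (Cp q F p); rewrite CpE hl pinc card_CpU // add1n in h.
      by rewrite expnS expn1 h subn1.
  + move=> p p' pl p'l npp; rewrite disjoint_subset; apply/subsetP => M.
    rewrite in_setD1 CpE => /andP [Ml /andP [sM pM]]; rewrite inE in_setD1 CpE.
    rewrite sM Ml /=; apply/negP => p'M; move/negP: Ml; apply; apply/eqP.
    move: pl p'l; rewrite !onlE => /andP [pU pl] /andP [p'U p'l].
    exact: (two_points_line p p' M l (unital_point _ pU) (unital_point _ p'U) npp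
              (secant_line _ sM) lL pM p'M pl p'l).
- split.
  + rewrite cardsD (setIidPr _) ?cardU ?hcl; last first.
      by apply/subsetP => P; rewrite onlE => /andP [].
    by rewrite subSS !expnS expn0 muln1 mulnA.
  + move=> p; rewrite in_setD onlE => /andP [npl pU].
    have pnl : ~~ incident F p l by move: npl; rewrite pU.
    have rnp : forall r, r \in unital_on q F l -> r != p.
      by move=> r; rewrite onlE => /andP [_ rl]; apply: contraTneq rl => ->.
    split.
    * apply/setP => M; rewrite in_setI CpE NbE setE.
      apply/idP/idP.
        case/andP => /andP [sM pM] /andP [_ /andP [lM /existsP [r /andP [rU /andP [rl rM]]]]].
        by rewrite sM pM /=; apply/existsP; exists r; rewrite onlE rU rl rM.
      case/andP => sM /andP [pM /existsP [r /andP [rl rM]]].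
      rewrite sM pM /= /Hadj; apply/andP; split.
        by apply: contraNneq pnl => ->.
      by apply/existsP; exists r; move: rl; rewrite onlE => /andP [-> ->].
    * split; first by apply/subsetP => M; rewrite in_setI CpE => /andP [/andP [-> _] _].
      move=> M1 M2; rewrite !in_setI !CpE => /andP [/andP [_ h1] _] /andP [/andP [_ h2] _] n12.
      by rewrite /Hadj n12; apply/existsP; exists p; rewrite pU h1 h2.
    * have eqI : Cp q F p :&: Nbhd q F l = [set jn p r | r in unital_on q F l].
        apply/setP => M; apply/idP/imsetP.
          rewrite in_setI CpE NbE => /andP [/andP [sM pM] /andP [_ /andP [lM /existsP [r /andP [rU /andP [rl rM]]]]]].
          have rl' : r \in unital_on q F l by rewrite onlE rU rl.
          have npr : p != r by rewrite eq_sym rnp.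
          exists r => //; have [j1 j2 j3] := jn_props _ _ pU rU npr.
          exact: (two_points_line p r M (jn p r) (unital_point _ pU) (unital_point _ rU)
                   npr (secant_line _ sM) (secant_line _ j1) pM rM j2 j3).
        case=> r rl ->; move: (rl); rewrite onlE => /andP [rU rl'].
        have npr : p != r by rewrite eq_sym rnp.
        have [j1 j2 j3] := jn_props _ _ pU rU npr.
        rewrite in_setI CpE NbE j1 j2 /= /Hadj; apply/andP; split.
          by apply: contraNneq pnl => ->.
        by apply/existsP; exists r; rewrite rU rl' j3.
      rewrite eqI card_in_imset // => r1 r2 h1 h2 e; apply/eqP; apply/negPn/negP => n12.
      move: (h1) (h2); rewrite !onlE => /andP [r1U r1l] /andP [r2U r2l].
      have np1 : p != r1 by rewrite eq_sym rnp.
      have np2 : p != r2 by rewrite eq_sym rnp.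
      have [j1 j2 j3] := jn_props _ _ pU r1U np1.
      have [k1 k2 k3] := jn_props _ _ pU r2U np2.
      rewrite -e in k3.
      have := two_points_line r1 r2 (jn p r1) l (unital_point _ r1U) (unital_point _ r2U)
                n12 (secant_line _ j1) lL j3 k3 r1l r2l.
      by move=> el; move: pnl; rewrite -el j2.
- move=> M1 M2 hM1 hM2 /andP [n12 /existsP [P /andP [PU /andP [P1 P2]]]].
  have inc_at : forall M, M \in Nbhd q F l -> incident F P M -> M \in clique_at q F l P.
    move=> M hM PM; rewrite /clique_at; case: ifP => Pl.
      rewrite in_setD1 CpE PM andbT; move: hM; rewrite NbE => /andP [-> /andP [lM _]].
      by rewrite eq_sym lM.
    by rewrite in_setI CpE hM PM !andbT; move: hM; rewrite NbE => /andP [].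
  exists P; split; first by split => //; apply: inc_at.
  move=> P' [P'U /clique_at_inc [s1 P'1] /clique_at_inc [s2 P'2]].
  apply/eqP; apply/negPn/negP => nPP; move/negP: n12; apply; apply/eqP.
  exact: (two_points_line P P' M1 M2 (unital_point _ PU) (unital_point _ P'U) nPP
            (secant_line _ s1) (secant_line _ s2) P1 P'1 P2 P'2).
- move=> M1 M2 h1 h2; split.
    case/andP => n12 /existsP [P /andP [PU /and3P [Pnl P1 P2]]].
    split => //; exists P; first by rewrite in_setD onlE PU Pnl.
    by rewrite /clique_at (negbTE Pnl) !in_setI !CpE h1 h2 P1 P2 !andbT;
      move: h1 h2; rewrite !NbE => /andP [-> _] /andP [-> _].
  case=> n12 [P]; rewrite in_setD onlE => /andP [nPl PU].
  have Pnl : ~~ incident F P l by move: nPl; rewrite PU.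
  case/andP => /clique_at_inc [_ P1] /clique_at_inc [_ P2].
  by rewrite /Gadj n12; apply/existsP; exists P; rewrite PU Pnl P1 P2.
Qed.

End Fld.

Theorem lemma2p4 (q : nat) (F : finFieldType)
  (hq : exists p k : nat, [/\ prime p, (0 < k)%N & q = (p ^ k)%N])
  (hF : #|F| = (q ^ 2)%N)
  (l : 'M[F]_3) (hl : l \in secants q F) :
  [/\
   [/\ #|unital_on q F l| = q.+1,
       (forall p, p \in unital_on q F l ->
          [/\ Cp q F p :\ l \subset Nbhd q F l,
              is_clique q F (Cp q F p :\ l)
            & #|Cp q F p :\ l| = (q ^ 2 - 1)%N])
     & (forall p p', p \in unital_on q F l -> p' \in unital_on q F l -> p != p' ->
          [disjoint (Cp q F p :\ l) & (Cp q F p' :\ l)])],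
   [/\ #|unital q F :\: unital_on q F l| = (q ^ 3 - q)%N
     & (forall p, p \in unital q F :\: unital_on q F l ->
          [/\ Cp q F p :&: Nbhd q F l =
                [set M in secants q F |
                   incident F p M && [exists r in unital_on q F l, incident F r M]],
              is_clique q F (Cp q F p :&: Nbhd q F l)
            & #|Cp q F p :&: Nbhd q F l| = q.+1])],
   (forall M1 M2, M1 \in Nbhd q F l -> M2 \in Nbhd q F l -> Hadj q F M1 M2 ->
      exists! p, [/\ p \in unital q F, M1 \in clique_at q F l p
                   & M2 \in clique_at q F l p])
 & (forall M1 M2, M1 \in Nbhd q F l -> M2 \in Nbhd q F l ->
      Gadj q F l M1 M2 <->
      (M1 != M2 /\ exists2 p, p \in unital q F :\: unital_on q F l &
                              (M1 \in clique_at q F l p) && (M2 \in clique_at q F l p)))].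
Proof.
case: hq => p [k [pp k0 eq]].
have q_gt1 : (1 < q)%N by rewrite eq -(expn0 p) ltn_exp2l ?prime_gt1.
have cardF : #|F| = (q * q)%N by rewrite hF expnS expn1.
have chp : p \in [pchar F].
  by apply: (@card_finPcharP F p (k * 2)) => //; rewrite hF eq expnM.
have frobD : forall x y : F, (x + y) ^+ q = x ^+ q + y ^+ q.
  move=> x y; apply: exprDn_pchar; rewrite eq pnatX; apply/orP; left.
  by rewrite pnatE.
have frobK : forall x : F, (x ^+ q) ^+ q = x.
  by move=> x; rewrite -exprM -cardF expf_card.
exact: (main_sec q F q_gt1 frobD frobK cardF l hl).
Qed.
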